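(* Let $R$ be a finite chain ring of length $2$ with residue field $\mathbb{F}_q$ and let $1\le n\le q^2+q$. Then $$\mathrm{m}_n(R)\le\left\lfloor\frac{(q+1)n-q}{q+2}\cdot(q^2+q+1)\right\rfloor.$$
   Context: Throughout, $R$ is a finite chain ring of nilpotency index (length) $2$, i.e. a finite local ring with radical $\mathrm{rad}R\neq 0$, $(\mathrm{rad}R)^2=0$, whose one-sided ideals form the chain $R\supsetneq\mathrm{rad}R\supsetneq 0$, with residue field $R/\mathrm{rad}R\cong\mathbb{F}_q$ ($q$ a prime power); then $|R|=q^2$. The projective Hjelmslev plane $\mathrm{PHG}(2,R)$ is the incidence structure whose points are the free rank-$1$ submodules of the right module $R_R^3$, whose lines are the free rank-$2$ submodules of $R_R^3$, with incidence given by inclusion; it has $q^4+q^3+q^2$ points and each line contains $q^2+q$ points. A $(k,n)$-arc is a map $\mathcal{K}$ from the point set to $\mathbb{N}_0$ with $\sum_x\mathcal{K}(x)=k$ and $\sum_{x\in L}\mathcal{K}(x)\le n$ for every line $L$; it is projective if $\mathcal{K}$ takes only values in $\{0,1\}$ (i.e. it is a set of $k$ points meeting every line in at most $n$ points). For $0\le n\le q^2+q$, $\mathrm{m}_n(R)$ denotes the largest $k$ such that a projective $(k,n)$-arc exists in $\mathrm{PHG}(2,R)$. *)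

(* Defs.v *)
From HB Require Import structures.
From mathcomp Require Import all_boot all_order all_algebra.
Set Implicit Arguments. Unset Strict Implicit. Unset Printing Implicit Defensive.
Import GRing.Theory.
Local Open Scope ring_scope.

Section ChainRing.
Variable R : finUnitRingType.

(* The set of non-units; for a local ring this is the radical crad R. *)
Definition crad : {set R} := [set x : R | x \isn't a GRing.unit].

(* R is local: the non-units form an additive subgroup (hence the unique
   maximal (two-sided) ideal = Jacobson radical). *)
Definition is_local : Prop :=
  forall x y : R, x \in crad -> y \in crad -> x + y \in crad.

Definition is_right_ideal (I : {set R}) : Prop :=
  0 \in I /\ (forall x y, x \in I -> y \in I -> x + y \in I) /\
  (forall x r, x \in I -> x * r \in I).

Definition is_left_ideal (I : {set R}) : Prop :=
  0 \in I /\ (forall x y, x \in I -> y \in I -> x + y \in I) /\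
  (forall x r, x \in I -> r * x \in I).

Definition chain_ring2 : Prop :=
  [/\ is_local,
      crad != [set 0],
      (forall x y, x \in crad -> y \in crad -> x * y = 0),
      (forall I, is_right_ideal I -> I = setT \/ I = crad \/ I = [set 0]) &
      (forall I, is_left_ideal I -> I = setT \/ I = crad \/ I = [set 0])].

(* The right module R_R^3, vectors as row vectors. *)
Definition rscale (v : 'rV[R]_3) (r : R) : 'rV[R]_3 := \row_i (v 0 i * r).

Definition comb k (b : {ffun 'I_k -> 'rV[R]_3}) (c : 'rV[R]_k) : 'rV[R]_3 :=
  \sum_(i < k) rscale (b i) (c 0 i).

Definition is_submodule (M : {set 'rV[R]_3}) : bool :=
  [&& 0 \in M, [forall x in M, forall y in M, x + y \in M] &
      [forall x in M, forall r : R, rscale x r \in M]].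

Definition free_rank k (M : {set 'rV[R]_3}) : bool :=
  is_submodule M &&
  [exists b : {ffun 'I_k -> 'rV[R]_3},
     injectiveb (comb b) && (M == [set comb b c | c : 'rV[R]_k])].

(* Points and lines of PHG(2,R); incidence is inclusion. *)
Definition is_point (M : {set 'rV[R]_3}) : bool := free_rank 1 M.
Definition is_line (M : {set 'rV[R]_3}) : bool := free_rank 2 M.

Definition proj_arc (S : {set {set 'rV[R]_3}}) (n : nat) : bool :=
  [forall x in S, is_point x] &&
  [forall L : {set 'rV[R]_3}, is_line L ==>
     (#|[set x in S | x \subset L]| <= n)%N].

Definition m_n (n : nat) : nat :=
  \max_(S : {set {set 'rV[R]_3}} | proj_arc S n) #|S|.

End ChainRing.

(* Main.v *)
Require Import Defs.
From mathcomp Require Import all_boot all_order all_algebra zify.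
Set Implicit Arguments. Unset Strict Implicit. Unset Printing Implicit Defensive.
Import GRing.Theory.

Local Close Scope ring_scope.
Local Open Scope ring_scope.

Section Ring.
Variable R : finUnitRingType.
Hypothesis Hc : chain_ring2 R.
Local Notation J := (crad R).

Lemma inJ (x : R) : (x \in J) = (x \isn't a GRing.unit).
Proof. by rewrite inE. Qed.

Lemma J0 : (0 : R) \in J. Proof. by rewrite inJ unitr0. Qed.
Lemma J1 : (1 : R) \notin J. Proof. by rewrite inJ unitr1. Qed.
Lemma JD x y : x \in J -> y \in J -> x + y \in J.
Proof. by case: Hc => H _ _ _ _; apply: H. Qed.
Lemma JN x : x \in J -> - x \in J.
Proof. by rewrite !inJ unitrN. Qed.
Lemma JB x y : x \in J -> y \in J -> x - y \in J.
Proof. by move=> hx hy; apply: JD => //; apply: JN. Qed.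
Lemma JJ x y : x \in J -> y \in J -> x * y = 0.
Proof. by case: Hc => _ _ H _ _; apply: H. Qed.
Lemma JMl x y : y \in J -> x * y \in J.
Proof.
move=> hy; case hx: (x \is a GRing.unit).
  by rewrite inJ unitrMr // -inJ.
by rewrite JJ ?J0 // inJ hx.
Qed.
Lemma JMr x y : x \in J -> x * y \in J.
Proof.
move=> hx; case hy: (y \is a GRing.unit).
  by rewrite inJ unitrMl // -inJ.
by rewrite JJ ?J0 // inJ hy.
Qed.

Lemma unit_regl (u x : R) : u \is a GRing.unit -> u * x = 0 -> x = 0.
Proof. by move=> hu h; rewrite -(mulKr hu x) h mulr0. Qed.
Lemma unit_regr (u x : R) : u \is a GRing.unit -> x * u = 0 -> x = 0.
Proof. by move=> hu h; rewrite -(mulrK hu x) h mul0r. Qed.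

Lemma exists_theta : exists2 t : R, t \in J & t != 0.
Proof.
case: Hc => _ H _ _ _.
have : ~~ (J \subset [set 0]).
  apply: contra H => sJ; rewrite eqEsubset sJ /= sub1set J0 //.
case/subsetPn => t tJ; rewrite inE => tn0; by exists t.
Qed.

Lemma unitP' (x : R) : x \notin J -> x \is a GRing.unit.
Proof. by rewrite inJ negbK. Qed.

Lemma left_gen (t : R) : t \in J -> t != 0 -> forall j, j \in J -> exists a, j = a * t.
Proof.
move=> tJ tn0.
pose I := [set a * t | a : R].
have hI : is_left_ideal I.
  split; first by apply/imsetP; exists 0 => //; rewrite mul0r.
  split.
    move=> x y /imsetP[a _ ->] /imsetP[b _ ->]; apply/imsetP; exists (a + b) => //.
    by rewrite mulrDl.
  move=> x r /imsetP[a _ ->]; apply/imsetP; exists (r * a) => //; by rewrite mulrA.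
case: Hc => _ _ _ _ H; case: (H I hI) => [IT|[IJ|I0]].
- have : (1 : R) \in I by rewrite IT inE.
  case/imsetP => a _ h1; have := J1; by rewrite h1 JMl.
- move=> j; rewrite -IJ => /imsetP[a _ ->]; by exists a.
- have : t \in I by apply/imsetP; exists 1; rewrite ?mul1r.
  by rewrite I0 inE (negbTE tn0).
Qed.

Lemma right_gen (t : R) : t \in J -> t != 0 -> forall j, j \in J -> exists a, j = t * a.
Proof.
move=> tJ tn0.
pose I := [set t * a | a : R].
have hI : is_right_ideal I.
  split; first by apply/imsetP; exists 0 => //; rewrite mulr0.
  split.
    move=> x y /imsetP[a _ ->] /imsetP[b _ ->]; apply/imsetP; exists (a + b) => //.
    by rewrite mulrDr.
  move=> x r /imsetP[a _ ->]; apply/imsetP; exists (a * r) => //; by rewrite mulrA.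
case: Hc => _ _ _ H _; case: (H I hI) => [IT|[IJ|I0]].
- have : (1 : R) \in I by rewrite IT inE.
  case/imsetP => a _ h1; have := J1; by rewrite h1 JMr.
- move=> j; rewrite -IJ => /imsetP[a _ ->]; by exists a.
- have : t \in I by apply/imsetP; exists 1; rewrite ?mulr1.
  by rewrite I0 inE (negbTE tn0).
Qed.

Lemma ann_l (t x : R) : t != 0 -> x * t = 0 -> x \in J.
Proof.
move=> tn0 h; apply/negPn/negP => /unitP' hu.
by move/eqP: tn0; apply; apply: unit_regl hu h.
Qed.
Lemma ann_r (t x : R) : t != 0 -> t * x = 0 -> x \in J.
Proof.
move=> tn0 h; apply/negPn/negP => /unitP' hu.
by move/eqP: tn0; apply; apply: unit_regr hu h.
Qed.

Lemma cardJ2 : (#|J| * #|J| = #|R|)%N.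
Proof.
have [t tJ tn0] := exists_theta.
have fib : forall y, y \in J -> #|[set r | t * r == y]| = #|J|.
  move=> y yJ; have [r0 ->] := right_gen tJ tn0 yJ.
  have -> : [set r | t * r == t * r0] = [set r0 + s | s in J].
    apply/setP => r; rewrite inE; apply/eqP/imsetP.
      move=> h; exists (r - r0); last by rewrite addrC subrK.
      by apply: (ann_r tn0); rewrite mulrBr h subrr.
    by case=> s sJ ->; rewrite mulrDr (JJ tJ sJ) addr0.
  by rewrite card_imset //; apply: addrI.
have -> : #|R| = (\sum_(r : R) 1)%N by rewrite sum1_card.
rewrite (partition_big (fun r => t * r) (mem J)) /=; last first.
  by move=> r _; apply: JMr.
rewrite -sum_nat_const; apply: eq_bigr => y yJ.
by rewrite -(fib y yJ) -sum1_card; apply: eq_bigl => r; rewrite inE.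
Qed.

End Ring.

Local Close Scope ring_scope.
Local Open Scope ring_scope.

Section Vec.
Variable R : finUnitRingType.
Local Notation V := ('rV[R]_3).

Definition box (A : 'I_3 -> {set R}) : {set V} := [set v : V | [forall i, v 0 i \in A i]].

Lemma card_box A : #|box A| = (\prod_(i < 3) #|A i|)%N.
Proof.
pose f := fun g : {ffun 'I_3 -> R} => (\row_i g i : V).
have finj : injective f.
  move=> g h /rowP e; apply/ffunP => i; have := e i; by rewrite !mxE.
have -> : box A = f @: [set g | g \in family (fun i => mem (A i))].
  apply/setP => v; rewrite inE; apply/forallP/imsetP.
    move=> h; exists [ffun i => v 0 i].
      by rewrite inE; apply/familyP => i; rewrite ffunE; apply: h.
    by apply/rowP => i; rewrite !mxE ffunE.
  case=> g; rewrite inE => /familyP hg -> i; rewrite mxE; exact: hg.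
rewrite card_imset // cardsE card_family foldrE big_map big_enum /=.
by apply: eq_bigr.
Qed.

Lemma card_box_i (i : 'I_3) (a b : {set R}) :
  #|box (fun j => if j == i then a else b)| = (#|a| * #|b| ^ 2)%N.
Proof.
rewrite card_box (bigD1 i) //= eqxx; congr (_ * _)%N.
rewrite (eq_bigr (fun _ => #|b|)); last by move=> j /negbTE ->.
by rewrite prod_nat_const cardC1 card_ord.
Qed.

Lemma card_box_c (a : {set R}) : #|box (fun _ => a)| = (#|a| ^ 3)%N.
Proof. by rewrite card_box prod_nat_const card_ord. Qed.

End Vec.

Local Close Scope ring_scope.
Local Open Scope ring_scope.

Section Vec2.
Variable R : finUnitRingType.
Hypothesis Hc : chain_ring2 R.
Local Notation J := (crad R).
Local Notation V := ('rV[R]_3).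

Definition J3 : {set V} := box (fun _ => J).

Lemma J3P (v : V) : reflect (forall i, v 0 i \in J) (v \in J3).
Proof. rewrite inE; exact: forallP. Qed.

Lemma unimodP (v : V) : reflect (exists i, v 0 i \is a GRing.unit) (v \notin J3).
Proof.
apply: (iffP idP).
  move=> h; apply/existsP; move: h; apply: contraR; rewrite negb_exists => /forallP h.
  by apply/J3P => i; rewrite inJ h.
case=> i hi; apply/negP => /J3P /(_ i); by rewrite inJ hi.
Qed.

Lemma rscaleE (v : V) r i : rscale v r 0 i = v 0 i * r.
Proof. by rewrite mxE. Qed.
Lemma rscale1 (v : V) : rscale v 1 = v.
Proof. by apply/rowP => i; rewrite mxE mulr1. Qed.
Lemma rscaler0 (v : V) : rscale v 0 = 0.
Proof. by apply/rowP => i; rewrite !mxE mulr0. Qed.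
Lemma rscale0r r : rscale (0 : V) r = 0.
Proof. by apply/rowP => i; rewrite !mxE mul0r. Qed.
Lemma rscaleA (v : V) r s : rscale (rscale v r) s = rscale v (r * s).
Proof. by apply/rowP => i; rewrite !mxE mulrA. Qed.
Lemma rscaleDr (v : V) r s : rscale v (r + s) = rscale v r + rscale v s.
Proof. by apply/rowP => i; rewrite !mxE mulrDr. Qed.
Lemma rscaleDl (v w : V) r : rscale (v + w) r = rscale v r + rscale w r.
Proof. by apply/rowP => i; rewrite !mxE mulrDl. Qed.
Lemma rscaleN (v : V) r : rscale v (- r) = - rscale v r.
Proof. by apply/rowP => i; rewrite !mxE mulrN. Qed.
Lemma rscaleNl (v : V) r : rscale (- v) r = - rscale v r.
Proof. by apply/rowP => i; rewrite !mxE mulNr. Qed.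
Lemma rscaleBr (v : V) r s : rscale v (r - s) = rscale v r - rscale v s.
Proof. by rewrite rscaleDr rscaleN. Qed.
Lemma rscaleBl (v w : V) r : rscale (v - w) r = rscale v r - rscale w r.
Proof. by rewrite rscaleDl rscaleNl. Qed.

Lemma J3D (v w : V) : v \in J3 -> w \in J3 -> v + w \in J3.
Proof. move=> /J3P hv /J3P hw; apply/J3P => i; rewrite mxE; exact: JD. Qed.
Lemma J3N (v : V) : v \in J3 -> - v \in J3.
Proof. move=> /J3P hv; apply/J3P => i; rewrite mxE; exact: JN. Qed.
Lemma J3B (v w : V) : v \in J3 -> w \in J3 -> v - w \in J3.
Proof. by move=> hv hw; apply: J3D => //; apply: J3N. Qed.
Lemma J30 : (0 : V) \in J3.
Proof. apply/J3P => i; rewrite mxE; exact: J0. Qed.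
Lemma J3scale (v : V) r : v \in J3 -> rscale v r \in J3.
Proof. move=> /J3P hv; apply/J3P => i; rewrite mxE; exact: JMr. Qed.
Lemma J3scaleJ (v : V) r : r \in J -> rscale v r \in J3.
Proof. move=> hr; apply/J3P => i; rewrite mxE; exact: JMl. Qed.
Lemma J3kill (v : V) t : v \in J3 -> t \in J -> rscale v t = 0.
Proof. move=> /J3P hv ht; apply/rowP => i; rewrite !mxE; exact: JJ. Qed.

Lemma unimod_inj (v : V) r s : v \notin J3 -> rscale v r = rscale v s -> r = s.
Proof.
case/unimodP => i hi /rowP /(_ i); rewrite !mxE => h.
apply/eqP; rewrite -subr_eq0; apply/eqP; apply: (unit_regl hi).
by rewrite mulrBr h subrr.
Qed.

Lemma unimod_scaleJ3 (v : V) r : v \notin J3 -> (rscale v r \in J3) = (r \in J).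
Proof.
case/unimodP => i hi; apply/idP/idP; last exact: J3scaleJ.
move/J3P/(_ i); rewrite mxE => h; apply/negPn/negP => /(unitP' ) hr.
by move: h; rewrite inJ unitrMr // hr.
Qed.

Definition pt (v : V) : {set V} := [set rscale v r | r : R].

Lemma in_pt (v : V) z : (z \in pt v) = [exists r, z == rscale v r].
Proof.
apply/imsetP/existsP; first by case=> r _ ->; exists r.
by case=> r /eqP ->; exists r.
Qed.

Lemma pt_self (v : V) : v \in pt v.
Proof. by apply/imsetP; exists 1 => //; rewrite rscale1. Qed.

Lemma card_pt (v : V) : v \notin J3 -> #|pt v| = #|R|.
Proof.
move=> hv; rewrite card_imset //; move=> r s; exact: unimod_inj.
Qed.

Lemma comb1E (b : {ffun 'I_1 -> V}) c : comb b c = rscale (b ord0) (c 0 ord0).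
Proof. by rewrite /comb big_ord1. Qed.

Lemma point_pt (P : {set V}) : is_point P -> exists2 v, v \notin J3 & P = pt v.
Proof.
case/andP => _ /existsP [b /andP [/injectiveP binj /eqP ->]].
exists (b ord0).
  apply/negP => hJ; have [t tJ tn0] := exists_theta Hc.
  have : comb b (const_mx t) = comb b 0.
    by rewrite !comb1E !mxE rscaler0 J3kill.
  move/binj/matrixP/(_ 0 0); rewrite !mxE => e; by rewrite e eqxx in tn0.
apply/setP => z; apply/imsetP/imsetP.
  by case=> c _ ->; exists (c 0 ord0) => //; rewrite comb1E.
case=> r _ ->; exists (const_mx r) => //; by rewrite comb1E mxE.
Qed.

Definition b2 (v w : V) : {ffun 'I_2 -> V} := [ffun j : 'I_2 => if j == ord0 then v else w].
Definition mkc (r s : R) : 'rV[R]_2 := \row_(j < 2) (if j == ord0 then r else s).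

Lemma comb2E (b : {ffun 'I_2 -> V}) c :
  comb b c = rscale (b ord0) (c 0 ord0) + rscale (b ord_max) (c 0 ord_max).
Proof.
rewrite /comb big_ord_recr big_ord1 /=.
by have -> : widen_ord (leqnSn 1) ord0 = ord0 :> 'I_2 by apply: val_inj.
Qed.

Lemma mkcE (c : 'rV[R]_2) : c = mkc (c 0 ord0) (c 0 ord_max).
Proof.
apply/rowP => j; rewrite mxE; case: j => [[|[|//]] ?] /=.
  by congr (c 0 _); apply: val_inj.
by congr (c 0 _); apply: val_inj.
Qed.

Definition ln (v w : V) : {set V} := [set comb (b2 v w) c | c : 'rV[R]_2].

Lemma comb_b2 v w r s : comb (b2 v w) (mkc r s) = rscale v r + rscale w s.
Proof. by rewrite comb2E !ffunE !mxE /=. Qed.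

Lemma in_ln (v w : V) z :
  reflect (exists r s, z = rscale v r + rscale w s) (z \in ln v w).
Proof.
apply: (iffP imsetP).
  case=> c _ ->; exists (c 0 ord0), (c 0 ord_max); by rewrite [in LHS](mkcE c) comb_b2.
case=> r [s ->]; exists (mkc r s) => //; by rewrite comb_b2.
Qed.

Definition submod (L : {set V}) :=
  [/\ (0 : V) \in L, (forall x y, x \in L -> y \in L -> x + y \in L) &
      (forall x r, x \in L -> rscale x r \in L)].

Lemma submod_of (L : {set V}) : is_submodule L -> submod L.
Proof.
case/and3P => h0 /forallP hD /forallP hS; split => //.
  move=> x y hx hy; by move: (hD x) => /implyP/(_ hx)/forallP/(_ y)/implyP/(_ hy).
move=> x r hx; by move: (hS x) => /implyP/(_ hx)/forallP/(_ r).
Qed.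

Lemma submodN (L : {set V}) x : submod L -> x \in L -> - x \in L.
Proof.
case=> _ _ hS hx; have -> : - x = rscale x (-1) by rewrite rscaleN rscale1.
exact: hS.
Qed.

Lemma submodB (L : {set V}) x y : submod L -> x \in L -> y \in L -> x - y \in L.
Proof. move=> hL hx hy; case: (hL) => _ hD _; by apply: hD => //; apply: submodN. Qed.

Lemma ln_sub (L : {set V}) v w : submod L -> v \in L -> w \in L -> ln v w \subset L.
Proof.
move=> [h0 hD hS] hv hw; apply/subsetP => z /in_ln [r [s ->]].
by apply: hD; apply: hS.
Qed.

Lemma ln_submod v w : submod (ln v w).
Proof.
split.
- apply/in_ln; exists 0, 0; by rewrite !rscaler0 addr0.
- move=> x y /in_ln [r [s ->]] /in_ln [r' [s' ->]]; apply/in_ln; exists (r + r'), (s + s').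
  by rewrite !rscaleDr addrACA.
- move=> x t /in_ln [r [s ->]]; apply/in_ln; exists (r * t), (s * t).
  by rewrite rscaleDl !rscaleA.
Qed.

Lemma v_in_ln v w : v \in ln v w.
Proof. apply/in_ln; exists 1, 0; by rewrite rscale1 rscaler0 addr0. Qed.
Lemma w_in_ln v w : w \in ln v w.
Proof. apply/in_ln; exists 0, 1; by rewrite rscale1 rscaler0 add0r. Qed.

Lemma is_submodule_of (L : {set V}) : submod L -> is_submodule L.
Proof.
case=> h0 hD hS; apply/and3P; split => //.
  apply/forallP => x; apply/implyP => hx; apply/forallP => y; apply/implyP => hy; exact: hD.
apply/forallP => x; apply/implyP => hx; apply/forallP => r; exact: hS.
Qed.

Lemma mk_line v w :
  (forall r s, rscale v r + rscale w s = 0 -> r = 0 /\ s = 0) -> is_line (ln v w).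
Proof.
move=> hind; apply/andP; split; first exact/is_submodule_of/ln_submod.
apply/existsP; exists (b2 v w); apply/andP; split => //.
apply/injectiveP => c c' e.
rewrite (mkcE c) (mkcE c') in e *.
rewrite !comb_b2 in e.
have : rscale v (c 0 ord0 - c' 0 ord0) + rscale w (c 0 ord_max - c' 0 ord_max) = 0.
  by rewrite !rscaleBr addrACA e -opprD subrr.
case/hind => /eqP; rewrite subr_eq0 => /eqP -> /eqP; rewrite subr_eq0 => /eqP -> //.
Qed.

Lemma indep_vw (v w : V) (i : 'I_3) :
  v 0 i \is a GRing.unit -> w 0 i = 0 -> w \notin J3 ->
  forall r s, rscale v r + rscale w s = 0 -> r = 0 /\ s = 0.
Proof.
move=> hv hw hwu r s e.
have r0 : r = 0.
  move/rowP: e => /(_ i); rewrite !mxE hw mul0r addr0; exact: unit_regl hv.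
split => //; move: e; rewrite r0 rscaler0 add0r => e.
by apply: (unimod_inj hwu); rewrite e rscaler0.
Qed.

End Vec2.

Local Close Scope ring_scope.
Local Open Scope ring_scope.

Lemma fam_count (T : finType) (F : {set {set T}}) (U : {set T}) (a : nat) :
  (forall A, A \in F -> A \subset U) ->
  (forall A B, A \in F -> B \in F -> A != B -> [disjoint A & B]) ->
  (forall A, A \in F -> a <= #|A|)%N ->
  (#|F| * a <= #|U|)%N.
Proof.
move=> hU hD ha.
have tI : trivIset F by apply/trivIsetP => A B hA hB; apply: hD.
rewrite -sum_nat_const; apply: (@leq_trans (\sum_(A in F) #|A|)).
  by apply: leq_sum => A hA; apply: ha.
rewrite (eqnP tI); apply: subset_leq_card; apply/bigcupsP => A hA; exact: hU.
Qed.

Section Lines.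
Variable R : finUnitRingType.
Hypothesis Hc : chain_ring2 R.
Local Notation J := (crad R).
Local Notation V := ('rV[R]_3).
Local Notation J3 := (@J3 R).

Lemma line_data (L : {set V}) : is_line L ->
  submod L /\ exists b : {ffun 'I_2 -> V}, injective (comb b) /\ L = [set comb b c | c : 'rV_2].
Proof.
case/andP => hs /existsP [b /andP [/injectiveP binj /eqP hL]].
split; first exact: submod_of.
by exists b.
Qed.

Lemma card_line (L : {set V}) : is_line L -> #|L| = (#|R| ^ 2)%N.
Proof.
case/line_data => _ [b [binj ->]]; rewrite card_imset // card_mx //.
Qed.

Lemma line_J3 (L : {set V}) : is_line L -> (#|L :&: J3| <= #|J| ^ 2)%N.
Proof.
case/line_data => _ [b [binj hL]].
have [t tJ tn0] := exists_theta Hc.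
pose f := fun p : R * R => comb b (mkc p.1 p.2).
apply: (@leq_trans #|f @: setX J J|); last by rewrite (leq_trans (leq_imset_card _ _)) // cardsX.
apply/subset_leq_card/subsetP => z; rewrite inE hL => /andP [/imsetP [c _ ->] hz].
apply/imsetP; exists (c 0 ord0, c 0 ord_max); last by rewrite /f /= -mkcE.
have : comb b (mkc (c 0 ord0 * t) (c 0 ord_max * t)) = comb b (mkc 0 0).
  rewrite !comb2E !mxE /= !rscaler0 addr0 -!rscaleA -rscaleDl -comb2E.
  exact: (J3kill Hc hz tJ).
move/binj => e.
have e0 := congr1 (fun m : 'rV[R]_2 => m 0 ord0) e; have e1 := congr1 (fun m : 'rV[R]_2 => m 0 ord_max) e.
rewrite /= !mxE /= in e0 e1.
by rewrite inE /= (ann_l tn0 e0) (ann_l tn0 e1).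
Qed.

Lemma cardR_gt0 : (0 < #|R|)%N.
Proof. by apply/card_gt0P; exists 0. Qed.

Lemma line_struct (L : {set V}) (v : V) (i : 'I_3) :
  is_line L -> v 0 i \is a GRing.unit -> v \in L ->
  exists w : V, [/\ w 0 i = 0, w \notin J3, L = ln v w &
                    forall z, z \in L -> z 0 i = 0 -> z \in pt w].
Proof.
move=> hl hv hvL.
have [hsub _] := line_data hl.
case: (hsub) => h0 hD hS.
pose LH := [set z in L | z 0 i == 0].
pose psi := fun p : R * V => rscale v p.1 + p.2.
have psi_inj : {in setX setT LH &, injective psi}.
  move=> [a h] [a' h']; rewrite !inE /=.
 move=> /andP [_ /eqP hi] /andP [_ /eqP hi'] e.
  have ea : a = a'.
    have := congr1 (fun m : V => m 0 i) e; rewrite /psi /= !mxE hi hi' !addr0 => e'.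
    apply/eqP; rewrite -subr_eq0; apply/eqP; apply: (unit_regl hv).
    by rewrite mulrBr e' subrr.
  by move: e; rewrite /psi /= ea => /addrI ->.
have psi_im : psi @: setX setT LH = L.
  apply/setP => z; apply/imsetP/idP.
    case=> [[a h]]; rewrite !inE /= => /andP [hh _] ->.
    by apply: hD => //; apply: hS.
  move=> hz; exists ((v 0 i)^-1 * z 0 i, z - rscale v ((v 0 i)^-1 * z 0 i)).
    rewrite !inE /=; apply/andP; split.
      by apply: submodB => //; apply: hS.
    by rewrite !mxE mulVKr // subrr.
  by rewrite /psi /= addrC subrK.
have cLH : #|LH| = #|R|.
  have := card_line hl; rewrite -psi_im (card_in_imset psi_inj) cardsX cardsT => e.
  by apply/eqP; rewrite -(eqn_pmul2l cardR_gt0) e.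
have [t tJ tn0] := exists_theta Hc.
have [w wLH wu] : exists2 w, w \in LH & w \notin J3.
  apply/exists_inP; apply: contraT; rewrite negb_exists_in => /forall_inP hall.
  have sub : LH \subset L :&: J3.
    apply/subsetP => z hz; rewrite inE; apply/andP; split; first by move: hz; rewrite inE => /andP [].
    by move: (hall z hz); rewrite negbK.
  have eq : LH = L :&: J3.
    apply/eqP; rewrite eqEcard sub /= cLH -(cardJ2 Hc).
    by rewrite (leq_trans (line_J3 hl)) // mulnn.
  have : rscale v t \in L :&: J3 by rewrite inE hS //= (J3scaleJ Hc).
  rewrite -eq inE => /andP [_ /eqP]; rewrite mxE => e.
  by rewrite (unit_regl hv e) eqxx in tn0.
move: wLH; rewrite inE => /andP [wL /eqP wi].
have ptLH : pt w = LH.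
  apply/eqP; rewrite eqEcard card_pt // cLH leqnn andbT.
  by apply/subsetP => z /imsetP [r _ ->]; rewrite inE hS //= mxE wi mul0r.
exists w; split => //.
  apply/eqP; rewrite eqEsubset ln_sub // andbT.
  apply/subsetP => z; rewrite -{1}psi_im => /imsetP [[a h]]; rewrite in_setX /= => /andP [_ hh] ->.
  rewrite -ptLH in hh; case/imsetP: hh => s _ ->.
  apply/in_ln; by exists a, s.
by move=> z hz hzi; rewrite ptLH inE hz hzi eqxx.
Qed.

Definition Lx (v : V) : {set {set V}} := [set L | is_line L && (v \in L)].
Definition OL (i : 'I_3) (L : {set V}) : {set V} := [set z in L | (z 0 i == 0) && (z \notin J3)].

Lemma card_Lx (v : V) (i : 'I_3) : v 0 i \is a GRing.unit -> (#|Lx v| <= #|R| + #|J|)%N.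
Proof.
move=> hv.
have key : forall L L' z, L \in Lx v -> L' \in Lx v -> z \in OL i L -> z \in OL i L' -> L = L'.
  have half : forall L L' z, L \in Lx v -> L' \in Lx v -> z \in OL i L -> z \in OL i L' ->
               L \subset L'.
    move=> L L' z; rewrite !inE => /andP [hl hvL] /andP [hl' hvL'] /andP [hzL /andP [/eqP hzi hzu]]
      /andP [hzL' _].
    have [w [wi wu eL hpt]] := line_struct hl hv hvL.
    have [s zs] : exists s, z = rscale w s by case/imsetP: (hpt z hzL hzi) => s _ ->; exists s.
    have su : s \is a GRing.unit.
      by apply: unitP'; rewrite -(unimod_scaleJ3 Hc s wu) -zs inE.
    have [hsub _] := line_data hl'; case: (hsub) => _ _ hS.
    have wL' : w \in L' by rewrite -[w](rscale1) -(mulrV su) -rscaleA -zs hS.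
    by rewrite eL ln_sub.
  move=> L L' z h1 h2 h3 h4; apply/eqP; rewrite eqEsubset (half L L' z) //.
  exact: (half L' L z).
pose F := OL i @: Lx v.
have cF : #|F| = #|Lx v|.
  apply: card_in_imset => L L' h1 h2 e.
  have hl := h1; rewrite inE in hl; case/andP: hl => hl hvL.
  have [w [wi wu eL _]] := line_struct hl hv hvL.
  have wO : w \in OL i L by rewrite inE eL w_in_ln wi eqxx wu.
  by apply: (key L L' w) => //; rewrite -e.
pose UH : {set V} := [set z : V | (z 0 i == 0) && (z \notin J3)].
have cUH : #|UH| = (#|R| ^ 2 - #|J| ^ 2)%N.
  pose Hi := box (fun j => if j == i then [set 0 : R] else [set: R]).
  pose HJ := box (fun j => if j == i then [set 0 : R] else J).
  have -> : UH = Hi :\: J3.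
    apply/setP => z; rewrite !inE [in RHS]andbC; congr (_ && _).
    apply/eqP/forallP => [hz j | /(_ i)]; last by rewrite eqxx inE => /eqP.
    by case: ifP => [/eqP -> | _]; rewrite !inE ?hz.
  rewrite cardsD card_box_i cards1 cardsT mul1n.
  have -> : Hi :&: J3 = HJ.
    apply/setP => z; rewrite !inE.
    apply/andP/forallP => [[/forallP h1 /forallP h2] j | h].
      by move: (h1 j) (h2 j); case: (j == i).
    split; apply/forallP => j; move: (h j); case: (j == i) => //; rewrite !inE //.
    by move/eqP ->; rewrite -inJ; apply: J0.
  by rewrite card_box_i cards1 mul1n.
have units : #|~: J| = (#|R| - #|J|)%N.
  by rewrite cardsCs setCK; congr (_ - _)%N; rewrite cardsCs cardsT.
have hJR : (#|J| < #|R|)%N.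
  rewrite -cardsT; apply: proper_card; rewrite properT; apply/negP => /eqP hJ.
  by have := J1 R; rewrite hJ inE.
have := @fam_count V F UH (#|R| - #|J|)%N.
rewrite cF cUH.
have -> : (#|R| ^ 2 - #|J| ^ 2 = (#|R| - #|J|) * (#|R| + #|J|))%N.
  exact: subn_sqr.
rewrite mulnC leq_pmul2l ?subn_gt0 //; apply.
- move=> A /imsetP [L _ ->]; apply/subsetP => z; rewrite !inE => /andP [_ ->] //.
- move=> A B /imsetP [L hL ->] /imsetP [L' hL' ->] ne.
  rewrite -setI_eq0; apply/eqP/setP => z; rewrite inE [RHS]inE; apply/negbTE/negP => /andP [h1 h2].
  by move: ne; rewrite (key L L' z hL hL' h1 h2) eqxx.
- move=> A /imsetP [L hL ->].
  have hl := hL; rewrite inE in hl; case/andP: hl => hl hvL.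
  have [w [wi wu eL _]] := line_struct hl hv hvL.
  rewrite -units; apply: (@leq_trans #|[set rscale w u | u in ~: J]|).
    by rewrite card_imset //; move=> a b; apply: unimod_inj.
  apply/subset_leq_card/subsetP => z /imsetP [u hu ->].
  rewrite inE; apply/andP; split.
    by rewrite eL; case: (ln_submod v w) => _ _ hS; apply: hS; apply: w_in_ln.
  rewrite mxE wi mul0r eqxx /= (unimod_scaleJ3 Hc _ wu).
  by rewrite inE in hu.
Qed.

End Lines.

Local Close Scope ring_scope.
Local Open Scope ring_scope.

Section Classes.
Variable R : finUnitRingType.
Hypothesis Hc : chain_ring2 R.
Local Notation J := (crad R).
Local Notation V := ('rV[R]_3).
Local Notation J3 := (@J3 R).

Definition cls (P : {set V}) : {set V} :=
  [set w : V | (w \notin J3) && [exists p in P, w - p \in J3]].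

Lemma in_cls_pt (v w : V) :
  (w \in cls (pt v)) = (w \notin J3) && [exists r, w - rscale v r \in J3].
Proof.
rewrite inE; congr (_ && _); apply/exists_inP/existsP.
  by case=> p /imsetP [r _ ->] h; exists r.
by case=> r h; exists (rscale v r) => //; apply/imsetP; exists r.
Qed.

Lemma cls_self (v : V) : v \notin J3 -> v \in cls (pt v).
Proof.
move=> hv; rewrite in_cls_pt hv; apply/existsP; exists 1.
by rewrite rscale1 subrr (J30 R).
Qed.

Lemma cls_sub (v1 v2 w : V) : w \in cls (pt v1) -> w \in cls (pt v2) ->
  cls (pt v1) \subset cls (pt v2).
Proof.
rewrite !in_cls_pt => /andP [wu /existsP [r1 h1]] /andP [_ /existsP [r2 h2]].
have r1u : r1 \is a GRing.unit.
  apply: unitP'; apply/negP => r1J; move/negP: wu; apply.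
  have -> : w = (w - rscale v1 r1) + rscale v1 r1 by rewrite subrK.
  by rewrite (J3D Hc h1) // (J3scaleJ Hc).
have d : rscale v1 r1 - rscale v2 r2 \in J3.
  have -> : rscale v1 r1 - rscale v2 r2 = (w - rscale v2 r2) - (w - rscale v1 r1).
    by rewrite opprB [RHS]addrC addrA subrK.
  exact: (J3B Hc).
apply/subsetP => z; rewrite !in_cls_pt => /andP [zu /existsP [s hs]].
rewrite zu /=; apply/existsP; exists (r2 * (r1^-1 * s)).
have -> : z - rscale v2 (r2 * (r1^-1 * s)) =
  (z - rscale v1 s) + rscale (rscale v1 r1 - rscale v2 r2) (r1^-1 * s).
  by rewrite rscaleBl !rscaleA (mulVKr r1u) addrA subrK.
by rewrite (J3D Hc hs) // (J3scale Hc).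
Qed.

Lemma cls_eq (v1 v2 w : V) : w \in cls (pt v1) -> w \in cls (pt v2) ->
  cls (pt v1) = cls (pt v2).
Proof.
by move=> h1 h2; apply/eqP; rewrite eqEsubset (cls_sub h1 h2) (cls_sub h2 h1).
Qed.

Definition CL : {set {set V}} := [set cls P | P in [set P : {set V} | is_point P]].

Lemma card_CL : (#|CL| * ((#|R| - #|J|) * #|J| ^ 2) <= #|R| ^ 3 - #|J| ^ 3)%N.
Proof.
have cU : #|~: J3| = (#|R| ^ 3 - #|J| ^ 3)%N.
  by rewrite cardsCs setCK /J3 card_box_c; congr (_ - _)%N; rewrite card_mx.
rewrite -cU; apply: fam_count.
- move=> A /imsetP [P _ ->]; apply/subsetP => z; rewrite !inE => /andP [h _] //.
- move=> A B /imsetP [P hP ->] /imsetP [Q hQ ->] ne.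
  rewrite inE in hP; rewrite inE in hQ.
  have [v _ ePv] := point_pt Hc hP; have [u _ eQu] := point_pt Hc hQ.
  rewrite -setI_eq0; apply/eqP/setP => z; rewrite inE [RHS]inE; apply/negbTE/negP => /andP [h1 h2].
  by move: ne; rewrite ePv eQu in h1 h2 *; rewrite (cls_eq h1 h2) eqxx.
- move=> A /imsetP [P hP ->]; rewrite inE in hP.
  have [v vu ->] := point_pt Hc hP.
  have [i hi] := unimodP v vu.
  pose Ti := box (fun k => if k == i then [set 0 : R] else J).
  have cTi : #|Ti| = (#|J| ^ 2)%N by rewrite card_box_i cards1 mul1n.
  have units : #|~: J| = (#|R| - #|J|)%N.
    by rewrite cardsCs setCK; congr (_ - _)%N; rewrite cardsCs cardsT.
  pose f := fun p : R * V => rscale v p.1 + p.2.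
  have finj : {in setX (~: J) Ti &, injective f}.
    move=> [a h] [a' h']; rewrite !in_setX /= => /andP [_ hh] /andP [_ hh'] e.
    have hi0 : h 0 i = 0 by move: hh; rewrite inE => /forallP /(_ i); rewrite eqxx inE => /eqP.
    have hi0' : h' 0 i = 0 by move: hh'; rewrite inE => /forallP /(_ i); rewrite eqxx inE => /eqP.
    have ea : a = a'.
      have := congr1 (fun m : V => m 0 i) e; rewrite /f /= !mxE hi0 hi0' !addr0 => e'.
      apply/eqP; rewrite -subr_eq0; apply/eqP; apply: (unit_regl hi).
      by rewrite mulrBr e' subrr.
    by move: e; rewrite /f /= ea => /addrI ->.
  rewrite -units -cTi -cardsX -(card_in_imset finj).
  apply/subset_leq_card/subsetP => z /imsetP [[a h]]; rewrite in_setX /= => /andP [ha hh] ->.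
  have hJ3 : h \in J3.
    apply/J3P => k; move: hh; rewrite inE => /forallP /(_ k).
    by case: (k == i) => //; rewrite inE => /eqP ->; apply: J0.
  have hi0 : h 0 i = 0 by move: hh; rewrite inE => /forallP /(_ i); rewrite eqxx inE => /eqP.
  rewrite in_cls_pt; apply/andP; split.
    apply/unimodP; exists i; rewrite /f /= !mxE hi0 addr0 unitrMl //.
    by apply: unitP'; rewrite inE in ha.
  by apply/existsP; exists a; rewrite /f /= addrC addKr.
Qed.

End Classes.

Local Close Scope ring_scope.
Local Open Scope ring_scope.

Lemma third (i k : 'I_3) : exists l : 'I_3, (l != i) && (l != k).
Proof.
case: i => [[|[|[|//]]] hi]; case: k => [[|[|[|//]]] hk];
  first [ (exists (@Ordinal 3 0 isT); done)
        | (exists (@Ordinal 3 1 isT); done)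
        | (exists (@Ordinal 3 2 isT); done) ].
Qed.

Section Lam.
Variable R : finUnitRingType.
Hypothesis Hc : chain_ring2 R.
Local Notation J := (crad R).
Local Notation V := ('rV[R]_3).
Local Notation J3 := (@J3 R).

Lemma pt_eq (u v : V) c : u \notin J3 -> v \notin J3 -> u = rscale v c -> pt u = pt v.
Proof.
move=> uu vu e; apply/eqP; rewrite eqEcard (card_pt uu) (card_pt vu) leqnn andbT e.
apply/subsetP => z /imsetP [r _ ->]; rewrite rscaleA; apply/imsetP; by exists (c * r).
Qed.

Lemma fam_lines (v u d : V) (i : 'I_3) c :
  v 0 i \is a GRing.unit -> d \in J3 -> d != 0 -> d 0 i = 0 -> u = rscale v c + d ->
  (#|J| <= #|[set L in Lx v | u \in L]|)%N.
Proof.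
move=> hv dJ dn0 di eu.
have [t tJ tn0] := exists_theta Hc.
have hex : forall m, exists a, d 0 m == a * t.
  move=> m; have [a ->] := left_gen Hc tJ tn0 (J3P _ dJ m); by exists a.
pose a := fun m => xchoose (hex m).
have ha : forall m, d 0 m = a m * t by move=> m; apply/eqP; exact: (xchooseP (hex m)).
have [k dk] : exists k, d 0 k != 0.
  apply/existsP; move: dn0; apply: contraR; rewrite negb_exists => /forallP h.
  by apply/eqP/rowP => m; rewrite mxE; apply/eqP; rewrite -[_ == _]negbK h.
have aku : a k \is a GRing.unit.
  apply: unitP'; apply/negP => akJ; move: dk; by rewrite ha (JJ Hc akJ tJ) eqxx.
have ki : k != i by apply: contraNneq dk => ->; rewrite di.
have [l /andP [li lk]] := third i k.
pose w := fun s : R => (\row_m (if m == i then 0 else if m == l then a m + s else a m) : V).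
have wi : forall s, w s 0 i = 0 by move=> s; rewrite mxE eqxx.
have wk : forall s, w s 0 k = a k by move=> s; rewrite mxE (negbTE ki) eq_sym (negbTE lk).
have wl : forall s, w s 0 l = a l + s by move=> s; rewrite mxE (negbTE li) eqxx.
have wu : forall s, w s \notin J3 by move=> s; apply/unimodP; exists k; rewrite wk.
have wt : forall s, s \in J -> rscale (w s) t = d.
  move=> s sJ; apply/rowP => m; rewrite !mxE.
  case: ifP => [/eqP -> | _]; first by rewrite mul0r di.
  case: ifP => _; last by rewrite ha.
  by rewrite mulrDl (JJ Hc sJ tJ) addr0 ha.
have Lline : forall s, is_line (ln v (w s)).
  move=> s; apply: mk_line; exact: (indep_vw hv (wi s) (wu s)).
pose Lf := fun s => ln v (w s).
have Linj : {in J &, injective Lf}.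
  move=> s s' sJ s'J e.
  have : w s' \in Lf s by rewrite e /Lf w_in_ln.
  case/in_ln => r [r' e'].
  have r0 : r = 0.
    have := congr1 (fun m : V => m 0 i) e'; rewrite !mxE !eqxx mul0r addr0 => /esym.
    exact: unit_regl hv.
  move: e'; rewrite r0 rscaler0 add0r => e'.
  have r1 : r' = 1.
    have := congr1 (fun m : V => m 0 k) e'; rewrite rscaleE !wk => e2.
    apply/eqP; rewrite -subr_eq0; apply/eqP; apply: (unit_regl aku).
    by rewrite mulrBr -e2 mulr1 subrr.
  have := congr1 (fun m : V => m 0 l) e'; rewrite rscaleE r1 mulr1 !wl.
  by move/addrI.
rewrite -(card_in_imset Linj); apply/subset_leq_card/subsetP => L /imsetP [s sJ ->].
rewrite !inE Lline v_in_ln /=; apply/in_ln; exists c, t; by rewrite wt.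
Qed.

End Lam.

Local Close Scope ring_scope.
Local Open Scope ring_scope.

Section Main.
Variable R : finUnitRingType.
Hypothesis Hc : chain_ring2 R.
Local Notation J := (crad R).
Local Notation V := ('rV[R]_3).
Local Notation J3 := (@J3 R).

Lemma cardJ_gt0 : (0 < #|J|)%N.
Proof. by apply/card_gt0P; exists 0; apply: J0. Qed.

Lemma lam_bounds (v u : V) (i : 'I_3) :
  v 0 i \is a GRing.unit -> v \notin J3 -> u \notin J3 -> pt u != pt v ->
  (1 <= #|[set L in Lx v | u \in L]|)%N /\
  (cls (pt u) = cls (pt v) -> #|J| <= #|[set L in Lx v | u \in L]|)%N.
Proof.
move=> hv vu uu ne.
pose c := (v 0 i)^-1 * u 0 i.
pose d := u - rscale v c.
have di : d 0 i = 0 by rewrite /d !mxE /c mulVKr // subrr.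
have eu : u = rscale v c + d by rewrite /d addrC subrK.
have dn0 : d != 0.
  apply: contraNneq ne => d0; apply/eqP; apply: (@pt_eq _ u v c uu vu).
  by rewrite eu d0 addr0.
have clsJ : cls (pt u) = cls (pt v) -> d \in J3.
  move=> ec; have := cls_self uu; rewrite ec in_cls_pt => /andP [_ /existsP [r hr]].
  set e := u - rscale v r in hr.
  have ec' : c = (v 0 i)^-1 * e 0 i + r.
    by rewrite /e /c !mxE mulrBr (mulKr hv) subrK.
  have -> : d = e - rscale v ((v 0 i)^-1 * e 0 i).
    rewrite /d ec' rscaleDr /e opprD addrA.
    by rewrite [u - _ - _]addrAC.
  by apply: (J3B Hc) => //; apply: (J3scaleJ Hc); apply: (JMl Hc); move/J3P: hr.
case dJ : (d \in J3).
  have h := fam_lines Hc hv dJ dn0 di eu.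
  by split; [exact: leq_trans cardJ_gt0 h | move=> _].
split; last by move/clsJ; rewrite dJ.
rewrite card_gt0; apply/set0Pn; exists (ln v d).
rewrite !inE; apply/andP; split.
  rewrite mk_line ?v_in_ln //; apply: (indep_vw hv di); by rewrite dJ.
apply/in_ln; exists c, 1; by rewrite rscale1.
Qed.

End Main.

Local Close Scope ring_scope.

Lemma arith0 (q k m n N : nat) :
  (k.+1 <= N * m.+1 -> N <= q.+2^2 + q.+2 + 1 ->
  k + q.+1 * m <= (q.+2^2 + q.+2) * n ->
  k.+1 * (q.+2 + 2) <= ((q.+2 + 1) * n.+1 - q.+2) * (q.+2 ^ 2 + q.+2 + 1))%N.
Proof.
move=> kN Nq key.
set N' := (q.+2^2 + q.+2 + 1)%N.
have kN' : (k.+1 <= N' * m.+1)%N by apply: (leq_trans kN); rewrite leq_mul2r Nq orbT.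
have h1 : (q.+1 * k.+1 <= q.+1 * (N' * m.+1))%N by rewrite leq_mul2l kN' orbT.
have h2 : (N' * (k + q.+1 * m) <= N' * ((q.+2^2 + q.+2) * n))%N by rewrite leq_mul2l key orbT.
have e : ((q.+2 + 1) * n.+1 - q.+2)%N = (q.+3 * n).+1.
  rewrite mulnS; lia.
rewrite e -(@leq_pmul2l q.+2) //.
rewrite /N' in h1 h2 *.
nia.
Qed.

Lemma arith (q n k M N : nat) : (2 <= q -> 1 <= n -> 1 <= M -> M <= k ->
  k <= N * M -> N <= q^2 + q + 1 ->
  (k - 1) + (q - 1) * (M - 1) <= (q^2 + q) * (n - 1) ->
  k * (q + 2) <= ((q + 1) * n - q) * (q ^ 2 + q + 1))%N.
Proof.
case: q => [|[|p]] // _; case: n => [|n] // _; case: M => [|m] // _.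
case: k => [|k] // _; rewrite !subn1 /=; exact: arith0.
Qed.

Lemma arith2 (q N : nat) : (2 <= q -> N * ((q*q - q) * q^2) <= (q*q)^3 - q^3 -> N <= q^2+q+1)%N.
Proof.
move=> q2 h.
have e : ((q*q)^3 - q^3 = (q^2+q+1) * ((q*q - q)*q^2))%N.
  case: q q2 {h} => [|[|p]] // _.
  have e1 : (p.+2 * p.+2 - p.+2 = p.+1 * p.+2)%N by rewrite mulSn addKn.
  rewrite e1.
  have e2 : ((p.+2 * p.+2) ^ 3 = p.+2 ^ 3 * p.+2 ^ 3)%N by rewrite expnMn.
  rewrite e2.
  set a := (p.+2 ^ 3)%N.
  have : (p.+2 ^ 3 = p.+2 * p.+2 * p.+2)%N by rewrite !expnS expn0 muln1 mulnA.
  have : (p.+2 ^ 2 = p.+2 * p.+2)%N by rewrite !expnS expn0 muln1.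
  move=> -> ha; rewrite /a ha.
  nia.
rewrite e leq_pmul2r in h => //.
rewrite muln_gt0 expn_gt0 (leq_trans _ q2) //= andbT subn_gt0.
by rewrite -{1}[q]mul1n ltn_mul2r (leq_trans _ q2).
Qed.

Lemma card_indic (T : finType) (A : {set T}) (P : pred T) :
  #|[set y in A | P y]| = (\sum_(y in A) P y)%N.
Proof.
rewrite -sum1_card big_mkcond [RHS]big_mkcond /=; apply: eq_bigr => y _.
by rewrite !inE; case: (y \in A); case: (P y).
Qed.

Local Open Scope ring_scope.

Section Final.
Variable R : finUnitRingType.
Hypothesis Hc : chain_ring2 R.
Local Notation J := (crad R).
Local Notation V := ('rV[R]_3).
Local Notation J3 := (@J3 R).

Lemma sub_pt (L : {set V}) (u : V) : submod L -> (pt u \subset L) = (u \in L).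
Proof.
case=> h0 hD hS; apply/subsetP/idP => [h | hu z /imsetP [r _ ->]].
  exact: h (pt_self u).
exact: hS.
Qed.

Theorem main_bound (q n : nat) : (q * #|J| = #|R|)%N -> (1 <= n)%N ->
  (m_n R n <= (((q + 1) * n - q) * (q ^ 2 + q + 1)) %/ (q + 2))%N.
Proof.
move=> Hq n1.
have cJ : #|J| = q.
  have := cardJ2 Hc; rewrite -Hq => /eqP; rewrite eqn_pmul2r ?cardJ_gt0 //.
  by move/eqP.
have cR : #|R| = (q * q)%N by rewrite -Hq cJ.
have hJR : (#|J| < #|R|)%N.
  rewrite -cardsT; apply: proper_card; rewrite properT; apply/negP => /eqP hJ.
  by have := J1 R; rewrite hJ inE.
have q2 : (2 <= q)%N.
  rewrite cJ cR in hJR; case: q hJR {Hq cJ cR} => [|[|p]] //.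
apply/bigmax_leqP => S hS.
rewrite leq_divRL ?addn_gt0 ?orbT //.
case: (boolP (S == set0)) => [/eqP -> | /set0Pn [x0 x0S]]; first by rewrite cards0.
case/andP: hS => /forall_inP hpt /forallP hln.
pose Mf := fun y => #|[set z in S | cls z == cls y]|.
case: (@arg_maxnP _ x0 (mem S) Mf x0S) => xm xmS xmax.
have {}xmS : xm \in S by [].
have {}xmax : forall j, j \in S -> (Mf j <= Mf xm)%N by [].
set M := Mf xm.
have kNM : (#|S| <= #|CL R| * M)%N.
  have -> : #|S| = (\sum_(C in @cls R @: S) #|[set z in S | cls z == C]|)%N.
    rewrite -sum1_card (partition_big (@cls R) (mem (@cls R @: S))) /=; last first.
      by move=> y yS; apply: imset_f.
    apply: eq_bigr => C _; rewrite -sum1_card; apply: eq_bigl => z; by rewrite inE.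
  apply: (@leq_trans (\sum_(C in @cls R @: S) M)).
    apply: leq_sum => C /imsetP [y yS ->]; exact: xmax.
  rewrite sum_nat_const leq_mul2r; apply/orP; right.
  apply/subset_leq_card/subsetP => C /imsetP [y yS ->]; apply: imset_f.
  by rewrite inE hpt.
have NB : (#|CL R| <= q ^ 2 + q + 1)%N.
  apply: arith2 => //; have := card_CL Hc; by rewrite cR cJ.
have M1 : (1 <= M)%N by rewrite card_gt0; apply/set0Pn; exists xm; rewrite inE xmS eqxx.
have Mk : (M <= #|S|)%N by apply/subset_leq_card/subsetP => z; rewrite inE => /andP [].
have [v vu xv] := point_pt Hc (hpt xm xmS).
have [i hi] := unimodP v vu.
pose Sx := S :\ xm.
pose lam := fun y : {set V} => #|[set L in Lx v | y \subset L]|.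
have lower : ((#|S| - 1) + (q - 1) * (M - 1) <= \sum_(y in Sx) lam y)%N.
  apply: (@leq_trans (\sum_(y in Sx) (1 + (cls y == cls xm) * (q - 1)))%N).
    rewrite big_split /= sum1_card -big_distrl /= -card_indic mulnC.
    have -> : #|Sx| = (#|S| - 1)%N by rewrite /Sx (cardsD1 xm S) xmS add1n subn1.
    have -> : #|[set y in Sx | cls y == cls xm]| = (M - 1)%N.
      rewrite /M /Mf (cardsD1 xm [set z in S | cls z == cls xm]) inE xmS eqxx add1n subn1 /=.
      apply: eq_card => z; rewrite !inE; by rewrite andbA.
    by [].
  apply: leq_sum => y; rewrite inE => /andP [yx yS].
  have [u uu yu] := point_pt Hc (hpt y yS).
  have ne : pt u != pt v by rewrite -yu -xv; move: yx; rewrite inE.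
  have [b1 b2] := lam_bounds Hc hi vu uu ne.
  have -> : lam y = #|[set L in Lx v | u \in L]|.
    rewrite /lam; apply: eq_card => L; rewrite !inE.
    case hl: (is_line L) => //=; have [hsub _] := line_data hl.
    by rewrite yu sub_pt.
  case: eqP => ec /=; last by rewrite mul0n addn0.
  rewrite mul1n add1n subn1 prednK ?(leq_trans _ q2) // -cJ; apply: b2.
  by rewrite -yu -xv.
have upper : (\sum_(y in Sx) lam y <= (q ^ 2 + q) * (n - 1))%N.
  rewrite /lam; under eq_bigr => y _ do rewrite card_indic.
  rewrite exchange_big /=.
  apply: (@leq_trans (\sum_(L in Lx v) (n - 1))%N).
    apply: leq_sum => L hL; rewrite -card_indic.
    move: hL; rewrite inE => /andP [hl hvL].
    have [hsub _] := line_data hl.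
    have xL : xm \subset L by rewrite xv sub_pt.
    have := hln L; rewrite hl /= => hn.
    have e := cardsD1 xm [set x in S | x \subset L].
    rewrite inE xmS xL /= in e.
    have -> : [set y in Sx | y \subset L] = [set x in S | x \subset L] :\ xm.
      apply/setP => z; rewrite !inE; by rewrite andbA.
    move: hn; rewrite e /= add1n => h; by rewrite subn1 -ltnS prednK.
  rewrite sum_nat_const leq_mul2r; apply/orP; right.
  have := card_Lx Hc hi; by rewrite cR cJ mulnn.
exact: arith q2 n1 M1 Mk kNM NB (leq_trans lower upper).
Qed.

End Final.

Local Close Scope ring_scope.

Theorem corollary4p9 (R : finUnitRingType) (q n : nat) :
  chain_ring2 R ->
  (q * #|crad R| = #|R|)%N ->
  (1 <= n <= q ^ 2 + q)%N ->
  (m_n R n <= (((q + 1) * n - q) * (q ^ 2 + q + 1)) %/ (q + 2))%N.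
Proof.
move=> Hc Hq /andP [n1 _]. exact (main_bound Hc Hq n1).
Qed.
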